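(* Let $(X,d)$ be a pseudometric space of diameter at most 1 and let $\phi:(X,d)\to(\bar X,\bar d)$ be its metric completion (so $\bar X$ is the set of equivalence classes of Cauchy sequences in $X$, with $(x_n)\sim(y_n)$ iff $\lim_n d(x_n,y_n)=0$, $\bar d((x_n),(y_n))=\lim_n d(x_n,y_n)$, and $\phi(x)$ the class of the constant sequence). Then $G(\phi)$ is an isomorphism in $\mathrm{ER}(\mathbf U)$, where $G:\mathbf{pMet}_1\to\mathrm{ER}(\mathbf U)$ is given by $G(X,d)=(X,d)$ and $G(f)=[(x,y)\mapsto d(f(x),y)]$.
   Context: $\mathbf{pMet}_1$: pseudometric spaces with all distances $\le 1$ and uniformly continuous maps. For functions $\alpha,\beta:Z\to[0,1]$ write $\alpha\sqsubseteq\beta$ if for every $\varepsilon>0$ there exists $\delta>0$ such that for all $z\in Z$, $\alpha(z)\le\delta$ implies $\beta(z)\le\varepsilon$. The category $\mathrm{ER}(\mathbf U)$: objects are pairs $(X,R)$ with $X$ a set and $R:X\times X\to[0,1]$ such that $R(x,x)=0$ for all $x$, $R(x,y)\sqsubseteq R(y,x)$ as functions of $(x,y)$, and $\max(R(x,y),R(y,z))\sqsubseteq R(x,z)$ as functions of $(x,y,z)$. A functional relation $(X,R)\to(Y,S)$ is a function $F:X\times Y\to[0,1]$ with $\max(F(x,y),R(x,x'),S(y,y'))\sqsubseteq F(x',y')$ as functions of $(x,x',y,y')$, $\max(F(x,y),F(x,y'))\sqsubseteq S(y,y')$ as functions of $(x,y,y')$, and $\inf_{y\in Y}F(x,y)=0$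 for all $x$. Morphisms are equivalence classes $[F]$ of functional relations, with $F\sim F'$ iff $F\sqsubseteq F'$ as functions on $X\times Y$; identity $[R]$; composite of $[F]$ and $[H]$ is $[(x,z)\mapsto\inf_y\max(F(x,y),H(y,z))]$. *)

(* Defs.v *)
From Stdlib Require Import Reals Lra ClassicalEpsilon.
From Coquelicot Require Import Coquelicot.
Open Scope R_scope.

Definition sqsub {Z : Type} (a b : Z -> R) : Prop :=
  forall eps, 0 < eps -> exists delta, 0 < delta /\
    forall z, a z <= delta -> b z <= eps.

(** infimum over a type, as an extended real (+oo for empty index type) *)
Definition inf_Rbar {A : Type} (f : A -> R) : Rbar :=
  Glb_Rbar (fun r => exists a, r = f a).

Definition ER_obj (X : Type) (Rel : X -> X -> R) : Prop :=
  (forall x y, 0 <= Rel x y <= 1) /\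
  (forall x, Rel x x = 0) /\
  sqsub (fun p : X * X => Rel (fst p) (snd p)) (fun p => Rel (snd p) (fst p)) /\
  sqsub (fun t : X * X * X => Rmax (Rel (fst (fst t)) (snd (fst t))) (Rel (snd (fst t)) (snd t)))
        (fun t => Rel (fst (fst t)) (snd t)).

Definition functional_rel {X Y : Type} (Rel : X -> X -> R) (S : Y -> Y -> R)
    (F : X -> Y -> R) : Prop :=
  (forall x y, 0 <= F x y <= 1) /\
  sqsub (fun t : X * X * Y * Y =>
           let '(x, x', y, y') := t in Rmax (F x y) (Rmax (Rel x x') (S y y')))
        (fun t => let '(x, x', y, y') := t in F x' y') /\
  sqsub (fun t : X * Y * Y => let '(x, y, y') := t in Rmax (F x y) (F x y'))
        (fun t => let '(x, y, y') := t in S y y') /\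
  (forall x, inf_Rbar (fun y => F x y) = Finite 0).

Definition rel_equiv {X Y : Type} (F F' : X -> Y -> R) : Prop :=
  sqsub (fun p : X * Y => F (fst p) (snd p)) (fun p => F' (fst p) (snd p)).

Definition rel_comp {X Y Z : Type} (F : X -> Y -> R) (H : Y -> Z -> R) : X -> Z -> R :=
  fun x z => real (inf_Rbar (fun y => Rmax (F x y) (H y z))).

Definition ER_iso {X Y : Type} (Rel : X -> X -> R) (S : Y -> Y -> R)
    (F : X -> Y -> R) : Prop :=
  functional_rel Rel S F /\
  exists H : Y -> X -> R, functional_rel S Rel H /\
    rel_equiv (rel_comp F H) Rel /\ rel_equiv (rel_comp H F) S.

Record PMet1 := {
  pm_car :> Type;
  pm_d : pm_car -> pm_car -> R;
  pm_d_bound : forall x y, 0 <= pm_d x y <= 1;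
  pm_d_refl : forall x, pm_d x x = 0;
  pm_d_sym : forall x y, pm_d x y = pm_d y x;
  pm_d_tri : forall x y z, pm_d x z <= pm_d x y + pm_d y z
}.

Definition G_map {X Y : Type} (dY : Y -> Y -> R) (f : X -> Y) : X -> Y -> R :=
  fun x y => dY (f x) y.

Section Completion.
Variable X : PMet1.

Definition cauchy_seq (u : nat -> X) : Prop :=
  forall eps, 0 < eps -> exists N, forall m n, (N <= m)%nat -> (N <= n)%nat ->
    pm_d X (u m) (u n) < eps.

Definition cls (u : nat -> X) : (nat -> X) -> Prop :=
  fun v => cauchy_seq v /\ is_lim_seq (fun n => pm_d X (u n) (v n)) 0.

Definition Xbar : Type :=
  { P : (nat -> X) -> Prop | exists u, cauchy_seq u /\ P = cls u }.

Definition rep (p : Xbar) : nat -> X :=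
  proj1_sig (constructive_indefinite_description _ (proj2_sig p)).

Definition dbar (p q : Xbar) : R :=
  real (Lim_seq (fun n => pm_d X (rep p n) (rep q n))).

Lemma const_cauchy (x : X) : cauchy_seq (fun _ => x).
Proof. intros eps He; exists 0%nat; intros; rewrite pm_d_refl; lra. Qed.

Definition phi (x : X) : Xbar :=
  exist _ (cls (fun _ => x)) (ex_intro _ (fun _ => x) (conj (const_cauchy x) eq_refl)).

End Completion.

(* Main.v *)
Require Import Defs.
From Stdlib Require Import Reals Lra Lia ClassicalEpsilon Classical.
From Coquelicot Require Import Coquelicot.
Open Scope R_scope.

Definition lim_to (a : nat -> R) (l : R) : Prop :=
  forall eps, 0 < eps -> exists N, forall n, (N <= n)%nat -> Rabs (a n - l) < eps.

Lemma lim_of_is a l : is_lim_seq a (Finite l) -> lim_to a l.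
Proof.
  intros H eps He. apply is_lim_seq_spec in H.
  exact (H (mkposreal eps He)).
Qed.

Lemma lim_le a b la lb : lim_to a la -> lim_to b lb ->
  (exists N, forall n, (N <= n)%nat -> a n <= b n) -> la <= lb.
Proof.
  intros Ha Hb [N HN]. destruct (Rle_or_lt la lb) as [h|h]; auto.
  exfalso. set (e := (la - lb)/2).
  destruct (Ha e ltac:(unfold e; lra)) as [N1 H1].
  destruct (Hb e ltac:(unfold e; lra)) as [N2 H2].
  set (n := Nat.max N (Nat.max N1 N2)).
  specialize (HN n ltac:(unfold n; lia)). specialize (H1 n ltac:(unfold n; lia)).
  specialize (H2 n ltac:(unfold n; lia)).
  apply Rabs_def2 in H1. apply Rabs_def2 in H2. unfold e in *. lra.
Qed.

Lemma lim_plus a b la lb : lim_to a la -> lim_to b lb -> lim_to (fun n => a n + b n) (la + lb).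
Proof.
  intros Ha Hb eps He.
  destruct (Ha (eps/2) ltac:(lra)) as [N1 H1].
  destruct (Hb (eps/2) ltac:(lra)) as [N2 H2].
  exists (Nat.max N1 N2). intros n Hn.
  specialize (H1 n ltac:(lia)). specialize (H2 n ltac:(lia)).
  apply Rabs_def2 in H1. apply Rabs_def2 in H2. apply Rabs_def1; lra.
Qed.

Lemma lim_const c : lim_to (fun _ => c) c.
Proof. intros eps He. exists 0%nat. intros. rewrite Rminus_eq_0, Rabs_R0. lra. Qed.

Lemma rmax_le a b c : Rmax a b <= c -> a <= c /\ b <= c.
Proof. intros H. split; eapply Rle_trans; eauto; [apply Rmax_l|apply Rmax_r]. Qed.

Lemma inf_zero {A : Type} (f : A -> R) :
  (forall a, 0 <= f a) -> (forall eps, 0 < eps -> exists a, f a <= eps) ->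
  inf_Rbar f = Finite 0.
Proof.
  intros H0 Hs. unfold inf_Rbar.
  destruct (Glb_Rbar_correct (fun r => exists a, r = f a)) as [Hlb Hg].
  set (g := Glb_Rbar _) in *.
  assert (L : Rbar_le (Finite 0) g).
  { apply Hg. intros r [a ->]. simpl. apply H0. }
  assert (U : forall eps, 0 < eps -> Rbar_le g (Finite eps)).
  { intros eps He. destruct (Hs eps He) as [a Ha].
    apply Rbar_le_trans with (Finite (f a)). apply Hlb. eauto. simpl; auto. }
  destruct g as [m| |]; simpl in *.
  - f_equal. destruct (Rle_or_lt m 0) as [h|h]. lra.
    specialize (U (m/2) ltac:(lra)). simpl in U. lra.
  - specialize (U 1 ltac:(lra)). exact (False_ind _ U).
  - exact (False_ind _ L).
Qed.

Lemma inf_approx {A : Type} (f : A -> R) (a0 : A) :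
  (forall a, 0 <= f a) ->
  forall eps, 0 < eps -> exists a, f a < real (inf_Rbar f) + eps.
Proof.
  intros H0 eps He. unfold inf_Rbar.
  destruct (Glb_Rbar_correct (fun r => exists a, r = f a)) as [Hlb Hg].
  set (g := Glb_Rbar _) in *.
  assert (L : Rbar_le (Finite 0) g).
  { apply Hg. intros r [a ->]. simpl. apply H0. }
  assert (U : Rbar_le g (Finite (f a0))). { apply Hlb. eauto. }
  destruct g as [m| |]; simpl in *; try contradiction.
  apply NNPP. intros Hn.
  assert (Rbar_le (Finite (m + eps)) (Finite m)).
  { apply Hg. intros r [a ->]. simpl. apply Rnot_lt_le. intros h. apply Hn. eauto. }
  simpl in H. lra.
Qed.

Section Main.
Variable X : PMet1.
Notation d := (pm_d X).
Notation D := (dbar X).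
Notation P := (phi X).

Lemma rep_spec (p : Xbar X) : cauchy_seq X (rep X p) /\ proj1_sig p = cls X (rep X p).
Proof. unfold rep. destruct (constructive_indefinite_description _ _). simpl. auto. Qed.

Lemma tri3 a b c e : d a e <= d a b + d b c + d c e.
Proof.
  pose proof (pm_d_tri X a b e). pose proof (pm_d_tri X b c e). lra.
Qed.

Lemma dbar_spec p q : lim_to (fun n => d (rep X p n) (rep X q n)) (D p q).
Proof.
  destruct (rep_spec p) as [Cu _]. destruct (rep_spec q) as [Cv _].
  set (u := rep X p) in *. set (v := rep X q) in *.
  assert (Hc : ex_lim_seq_cauchy (fun n => d (u n) (v n))).
  { intros [eps He]. simpl.
    destruct (Cu (eps/2) ltac:(lra)) as [N1 H1].
    destruct (Cv (eps/2) ltac:(lra)) as [N2 H2].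
    exists (Nat.max N1 N2). intros n m Hn Hm.
    specialize (H1 n m ltac:(lia) ltac:(lia)). specialize (H2 n m ltac:(lia) ltac:(lia)).
    pose proof (tri3 (u n) (u m) (v m) (v n)).
    pose proof (tri3 (u m) (u n) (v n) (v m)).
    rewrite (pm_d_sym X (u m) (u n)) in H0.
    rewrite (pm_d_sym X (v m) (v n)) in H. apply Rabs_def1; lra. }
  apply ex_lim_seq_cauchy_corr in Hc. destruct Hc as [l Hl].
  unfold dbar. fold u v. rewrite (is_lim_seq_unique _ _ Hl). simpl.
  apply lim_of_is; auto.
Qed.

Lemma dbar_bound p q : 0 <= D p q <= 1.
Proof.
  pose proof (dbar_spec p q). split.
  - eapply lim_le. apply lim_const. eauto. exists 0%nat; intros; apply pm_d_bound.
  - eapply lim_le. eauto. apply lim_const. exists 0%nat; intros; apply pm_d_bound.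
Qed.

Lemma dbar_sym p q : D p q = D q p.
Proof.
  pose proof (dbar_spec p q). pose proof (dbar_spec q p).
  apply Rle_antisym; eapply lim_le; eauto; exists 0%nat; intros; rewrite pm_d_sym; lra.
Qed.

Lemma dbar_tri p q r : D p r <= D p q + D q r.
Proof.
  eapply lim_le. apply dbar_spec. apply lim_plus; apply dbar_spec.
  exists 0%nat; intros; apply pm_d_tri.
Qed.

Lemma dbar_refl p : D p p = 0.
Proof.
  pose proof (dbar_spec p p). pose proof (dbar_bound p p).
  assert (D p p <= 0). { eapply lim_le. eauto. apply lim_const.
    exists 0%nat; intros; rewrite pm_d_refl; lra. }
  lra.
Qed.

Lemma rep_phi x : lim_to (fun n => d x (rep X (P x) n)) 0.
Proof.
  destruct (rep_spec (P x)) as [Cv E]. simpl in E.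
  assert (Hv : cls X (rep X (P x)) (rep X (P x))).
  { split; auto. eapply is_lim_seq_ext. 2: apply is_lim_seq_const.
    intros; simpl; rewrite pm_d_refl; auto. }
  rewrite <- E in Hv. destruct Hv as [_ Hl]. apply lim_of_is. exact Hl.
Qed.

Lemma dbar_phi x y : D (P x) (P y) = d x y.
Proof.
  pose proof (dbar_spec (P x) (P y)). pose proof (rep_phi x). pose proof (rep_phi y).
  set (v := rep X (P x)) in *. set (w := rep X (P y)) in *.
  apply Rle_antisym.
  - replace (d x y) with (0 + d x y + 0) by lra.
    eapply lim_le. exact H. apply lim_plus. apply lim_plus. exact H0. apply lim_const. exact H1.
    exists 0%nat. intros n _. cbv beta. pose proof (tri3 (v n) x y (w n)).
    rewrite (pm_d_sym X (v n) x) in H2. lra.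
  - replace (D (P x) (P y)) with (0 + D (P x) (P y) + 0) by lra.
    eapply lim_le. apply lim_const. apply lim_plus. apply lim_plus. exact H0. exact H. exact H1.
    exists 0%nat. intros n _. cbv beta. pose proof (tri3 x (v n) (w n) y).
    rewrite (pm_d_sym X (w n) y) in H2. lra.
Qed.

Lemma density p eps : 0 < eps -> exists x, D p (P x) <= eps.
Proof.
  intros He. destruct (rep_spec p) as [Cu _]. set (u := rep X p) in *.
  destruct (Cu eps He) as [N HN]. exists (u N).
  pose proof (dbar_spec p (P (u N))). pose proof (rep_phi (u N)).
  fold u in H. set (w := rep X (P (u N))) in *.
  replace eps with (eps + 0) by lra.
  eapply lim_le. eauto. apply lim_plus. apply lim_const. eauto.
  exists N. intros n Hn. specialize (HN n N Hn (Nat.le_refl _)).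
  pose proof (pm_d_tri X (u n) (u N) (w n)). lra.
Qed.

Theorem main : ER_iso d D (G_map D P).
Proof.
  unfold ER_iso, G_map. split; [|exists (fun q x => D q (P x)); split; [|split]].
  - split; [|split; [|split]].
    + intros; apply dbar_bound.
    + intros eps He. exists (eps/3). split. lra.
      intros [[[x x'] y] y']. simpl. intros H.
      apply rmax_le in H as [H1 H]. apply rmax_le in H as [H2 H3].
      pose proof (dbar_tri (P x') (P x) y'). pose proof (dbar_tri (P x) y y').
      rewrite dbar_phi, pm_d_sym in H. lra.
    + intros eps He. exists (eps/2). split. lra.
      intros [[x y] y']. simpl. intros H. apply rmax_le in H as [H1 H2].
      pose proof (dbar_tri y (P x) y'). rewrite (dbar_sym y (P x)) in H. lra.
    + intros x. apply inf_zero. intros; apply dbar_bound.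
      intros eps He. exists (P x). rewrite dbar_refl. lra.
  - split; [|split; [|split]].
    + intros; apply dbar_bound.
    + intros eps He. exists (eps/3). split. lra.
      intros [[[q q'] x] x']. simpl. intros H.
      apply rmax_le in H as [H1 H]. apply rmax_le in H as [H2 H3].
      pose proof (dbar_tri q' q (P x')). pose proof (dbar_tri q (P x) (P x')).
      rewrite dbar_phi in H0. rewrite (dbar_sym q' q) in H. lra.
    + intros eps He. exists (eps/2). split. lra.
      intros [[q x] x']. simpl. intros H. apply rmax_le in H as [H1 H2].
      pose proof (dbar_tri (P x) q (P x')). rewrite dbar_phi, (dbar_sym (P x) q) in H. lra.
    + intros q. apply inf_zero. intros; apply dbar_bound.
      apply density.
  - intros eps He. exists (eps/4). split. lra.
    intros [x x']. simpl. unfold rel_comp. intros H.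
    destruct (inf_approx (fun y => Rmax (D (P x) y) (D y (P x'))) (P x)
       ltac:(intros; pose proof (dbar_bound (P x) a); pose proof (Rmax_l (D (P x) a) (D a (P x'))); lra)
       (eps/4) ltac:(lra)) as [q Hq].
    assert (Hm : Rmax (D (P x) q) (D q (P x')) <= eps/2) by lra.
    apply rmax_le in Hm as [H1 H2].
    pose proof (dbar_tri (P x) q (P x')). rewrite dbar_phi in H0. lra.
  - intros eps He. exists (eps/4). split. lra.
    intros [q q']. simpl. unfold rel_comp. intros H.
    destruct (inf_approx (fun y => Rmax (D q (P y)) (D (P y) q')) (rep X q 0%nat)
       ltac:(intros; pose proof (dbar_bound q (P a)); pose proof (Rmax_l (D q (P a)) (D (P a) q')); lra)
       (eps/4) ltac:(lra)) as [x Hx].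
    assert (Hm : Rmax (D q (P x)) (D (P x) q') <= eps/2) by lra.
    apply rmax_le in Hm as [H1 H2].
    pose proof (dbar_tri q (P x) q'). lra.
Qed.

End Main.

Theorem mainTheorem10 (X : PMet1) :
  ER_iso (pm_d X) (dbar X) (G_map (dbar X) (phi X)).
Proof. exact (main X). Qed.
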